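(* Let $l,u,\hbar$ satisfy the standing assumptions below and let $(Y,R)\in C^1_G(0,T)\times C^T_B$ be such that $l_t\le\hat{\mathbb{E}}[\hbar(t,Y_t)]\le u_t$ for all $t\in[0,T]$. Then the minimality condition $$\int_s^t(\hat{\mathbb{E}}[\hbar(v,Y_v)]-l_v)dR_v\le0\quad\text{and}\quad\int_s^t(\hat{\mathbb{E}}[\hbar(v,Y_v)]-u_v)dR_v\le0\qquad\forall\,0\le s\le t\le T$$ is equivalent to the following: for each $0\le s<t\le T$, $R_t\ge R_s$ if $\hat{\mathbb{E}}[\hbar(v,Y_v)]<u_v$ for all $v\in(s,t]$, and $R_t\le R_s$ if $\hat{\mathbb{E}}[\hbar(v,Y_v)]>l_v$ for all $v\in(s,t]$; and for any $v\in[0,T]$, $dR_v\ge0$ if $\hat{\mathbb{E}}[\hbar(v,Y_v)]<u_v$ and $dR_v\le0$ if $\hat{\mathbb{E}}[\hbar(v,Y_v)]>l_v$.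
   Context: Setting: $\hat{\mathbb{E}}$ is the $G$-expectation on $\Omega_T=\{\omega\in C([0,T];\mathbb{R}^d):\omega_0=0\}$ (monotone sublinear non-degenerate $G$); $L^1_G(\Omega_t)$ the completion of bounded Lipschitz cylinder functionals of the canonical process up to $t$ under $\hat{\mathbb{E}}|\cdot|$. $C^1_G(0,T)$: processes $Y$ with $Y_v\in L^1_G(\Omega_v)$ and $v\mapsto Y_v$ continuous in $\hat{\mathbb{E}}|\cdot|$. $C^T_B$: deterministic continuous functions $R$ on $[0,T]$ of bounded variation with $R_0=0$. Standing assumptions: $l,u:[0,T]\to\mathbb{R}$ bounded continuous with $\inf_t(u_t-l_t)>0$; $\hbar:[0,T]\times\Omega_T\times\mathbb{R}\to\mathbb{R}$ with $(t,y)\mapsto\hbar(t,y)$ uniformly continuous uniformly in $\omega$, $y\mapsto\hbar(t,y)$ strictly increasing, $\hbar(t,y)\in L^1_G(\Omega_T)$, $\hat{\mathbb{E}}[\lim_{y\downarrow-\infty}\hbar(t,y)]<\inf_sl_s<\sup_su_s<\hat{\mathbb{E}}[\lim_{y\uparrow\infty}\hbar(t,y)]$, $|\hbar(t,y)|\le C_\hbar(1+|y|)$, $\underline{c}|y-y'|\le|\hbar(t,y)-\hbar(t,y')|\le\overline{c}|y-y'|$ ($C_\hbar>0$, $0<\underline{c}\le\overline{c}$). *)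

(* Defs.v *)
From HB Require Import structures.
From mathcomp Require Import all_boot all_order all_algebra.
From mathcomp Require Import all_classical all_reals all_analysis.
Set Implicit Arguments. Unset Strict Implicit. Unset Printing Implicit Defensive.
Import Order.TTheory GRing.Theory Num.Theory.
Import numFieldNormedType.Exports.
Local Open Scope classical_set_scope.
Local Open Scope ring_scope.

(* Abstract sublinear expectation space with a filtration of L^1     *)
(* spaces (an abstraction of (Omega_T, L^1_G(Omega_t), \hat E)).      *)
Record sublinear_space (R : realType) (T : R) := SublinearSpace {
  Omega : Type;
  L1 : R -> set (Omega -> R);
  Ehat : (Omega -> R) -> R;
  L1_incr : forall s t, 0 <= s -> s <= t -> t <= T -> L1 s `<=` L1 t;
  L1_cst : forall t c, L1 t (fun _ => c);
  L1_add : forall t X Y, L1 t X -> L1 t Y -> L1 t (fun w => X w + Y w);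
  L1_scale : forall t (a : R) X, L1 t X -> L1 t (fun w => a * X w);
  L1_abs : forall t X, L1 t X -> L1 t (fun w => `|X w|);
  Ehat_mono : forall X Y, L1 T X -> L1 T Y ->
      (forall w, X w <= Y w) -> Ehat X <= Ehat Y;
  Ehat_cst : forall c : R, Ehat (fun _ => c) = c;
  Ehat_subadd : forall X Y, L1 T X -> L1 T Y ->
      Ehat (fun w => X w + Y w) <= Ehat X + Ehat Y;
  Ehat_poshom : forall (a : R) X, L1 T X -> 0 <= a ->
      Ehat (fun w => a * X w) = a * Ehat X
}.

Arguments Omega {R T} s0.
Arguments L1 {R T} s0 _ _.
Arguments Ehat {R T} s0 _.

Definition C1G (R : realType) (T : R) (S : sublinear_space T)
  (Y : R -> Omega S -> R) : Prop :=
  (forall v, 0 <= v <= T -> L1 S v (Y v)) /\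
  (forall v, 0 <= v <= T -> forall eps : R, 0 < eps ->
     exists2 del : R, 0 < del & forall w, 0 <= w <= T -> `|v - w| < del ->
       Ehat S (fun om => `|Y v om - Y w om|) < eps).

Definition CTB (R : realType) (T : R) (Rf : R -> R) : Prop :=
  {within `[0, T], continuous Rf} /\ bounded_variation 0 T Rf /\ Rf 0 = 0.

Definition barriers_ok (R : realType) (T : R) (l u : R -> R) : Prop :=
  {within `[0, T], continuous l} /\ {within `[0, T], continuous u} /\
  (exists M : R, forall t, 0 <= t <= T -> `|l t| <= M /\ `|u t| <= M) /\
  (exists2 k : R, 0 < k & forall t, 0 <= t <= T -> k <= u t - l t).

Definition hbar_ok (R : realType) (T : R) (S : sublinear_space T)
  (hbar : R -> Omega S -> R -> R) : Prop :=
  (forall eps : R, 0 < eps -> exists2 del : R, 0 < del &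
     forall om t t' y y', 0 <= t <= T -> 0 <= t' <= T ->
       `|t - t'| < del -> `|y - y'| < del ->
       `|hbar t om y - hbar t' om y'| < eps) /\
  (forall t om y y', 0 <= t <= T -> y < y' -> hbar t om y < hbar t om y') /\
  (forall t y, 0 <= t <= T -> L1 S T (fun om => hbar t om y)) /\
  (exists2 C : R, 0 < C & forall t om y, 0 <= t <= T ->
       `|hbar t om y| <= C * (1 + `|y|)) /\
  (exists cl cu : R, 0 < cl /\ cl <= cu /\
     forall t om y y', 0 <= t <= T ->
       cl * `|y - y'| <= `|hbar t om y - hbar t om y'| /\
       `|hbar t om y - hbar t om y'| <= cu * `|y - y'|).

(* A partition is s with a < s_1 < ... < last = b (itv_partition, as in
   mathcomp's variation); the points are nth b (a :: s) i, and the tags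
   xi i lie in the i-th subinterval. *)
Definition RS_sum (R : realType) (f g : R -> R) (a b : R) (s : seq R)
  (xi : nat -> R) : R :=
  let p := nth b (a :: s) in
  \sum_(0 <= i < size s) f (xi i) * (g (p i.+1) - g (p i)).

Definition is_RS_integral (R : realType) (f g : R -> R) (a b I : R) : Prop :=
  forall eps : R, 0 < eps -> exists2 del : R, 0 < del &
    forall (s : seq R) (xi : nat -> R), itv_partition a b s ->
      (forall i, (i < size s)%N ->
         nth b (a :: s) i <= xi i <= nth b (a :: s) i.+1 /\
         nth b (a :: s) i.+1 - nth b (a :: s) i < del) ->
      `|RS_sum f g a b s xi - I| < eps.

Definition RS_int_le0 (R : realType) (f g : R -> R) (a b : R) : Prop :=
  exists I : R, is_RS_integral f g a b I /\ I <= 0.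

(* "dR_v >= 0" / "dR_v <= 0" at a point v of [0,T]: R is nondecreasing
   (resp. nonincreasing) on a neighbourhood of v relative to [0,T]. *)
Definition dR_nonneg_at (R : realType) (T : R) (Rf : R -> R) (v : R) : Prop :=
  exists2 del : R, 0 < del & forall a b, 0 <= a -> b <= T ->
    v - del < a -> a <= b -> b < v + del -> Rf a <= Rf b.

Definition dR_nonpos_at (R : realType) (T : R) (Rf : R -> R) (v : R) : Prop :=
  exists2 del : R, 0 < del & forall a b, 0 <= a -> b <= T ->
    v - del < a -> a <= b -> b < v + del -> Rf b <= Rf a.

(* Main.v *)
Require Import Defs.
From HB Require Import structures.
From mathcomp Require Import all_boot all_order all_algebra.
From mathcomp Require Import all_classical all_reals all_analysis.
From mathcomp Require Import ring lra zify.
Import Order.TTheory GRing.Theory Num.Theory.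
Import numFieldNormedType.Exports.
Local Open Scope classical_set_scope.
Local Open Scope ring_scope.
Definition gsum {R : realType} (g : R -> R) (x b : R) (s : seq R) (c : nat -> R) : R :=
  \sum_(0 <= i < size s) c i * (g (nth b (x :: s) i.+1) - g (nth b (x :: s) i)).

Definition good {R : realType} (f : R -> R) (eps x b : R) (s : seq R) (c : nat -> R) : Prop :=
  forall i, (i < size s)%N -> forall y, nth b (x :: s) i <= y <= nth b (x :: s) i.+1 ->
    `|c i - f y| <= eps.

Lemma gsum_nil {R : realType} (g : R -> R) (x b : R) c : gsum g x b [::] c = 0.
Proof. by rewrite /gsum big_geq. Qed.

Lemma gsum_cons {R : realType} (g : R -> R) (x b p : R) s c :
  gsum g x b (p :: s) c = c 0%N * (g p - g x) + gsum g p b s (fun i => c i.+1).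
Proof. by rewrite /gsum /= big_nat_recl. Qed.

Lemma gsum_split {R : realType} (f g : R -> R) (eps x b m q : R) (s : seq R) (d : nat -> R) :
  x < m -> m <= q -> itv_partition x b (q :: s) -> good f eps x b (q :: s) d ->
  (exists s' d', [/\ itv_partition m b s', good f eps m b s' d',
     gsum g x b (q :: s) d = d 0%N * (g m - g x) + gsum g m b s' d',
     (size s' <= (size s).+1)%N & (m = q -> (size s' <= size s)%N)])
  /\ (forall y, x <= y <= m -> `|d 0%N - f y| <= eps).
Proof.
move=> xm mq Hp Hg; split; last first.
  move=> y /andP[xy ym]; apply: (Hg 0%N) => //=.
  by rewrite xy (le_trans ym mq).
have [emq|nmq] := eqVneq m q.
  subst q; exists s, (fun i => d i.+1); split => //.
  - exact: itv_partition_cons Hp.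
  - by move=> i iS y Hy; apply: (Hg i.+1).
  - by rewrite gsum_cons.
have ltmq : m < q by rewrite lt_neqAle nmq mq.
exists (q :: s), d; split => //.
- move: Hp; rewrite /itv_partition /= => -[/andP[_ ps] lb]; split => //.
  by rewrite ltmq.
- move=> [|i] iS y Hy; last exact: (Hg i.+1).
  apply: (Hg 0%N) => //=; move: Hy => /= /andP[my yq].
  by rewrite yq andbT (le_trans (ltW xm) my).
- by rewrite !gsum_cons; ring.
- by move=> emq; rewrite emq eqxx in nmq.
Qed.

Lemma sz_aux {a b a1 b1 n : nat} : (a1 <= a.+1)%N -> (b1 <= b.+1)%N ->
  (a.+1 + b.+1 <= n.+1)%N -> (a1 <= a)%N \/ (b1 <= b)%N -> (a1 + b1 <= n)%N.
Proof. rewrite /=; lia. Qed.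

Lemma gsum_cmp {R : realType} (f g V : R -> R) (a b e1 e2 : R) :
  0 <= e1 -> 0 <= e2 ->
  (forall y z, a <= y -> y <= z -> z <= b -> `|g z - g y| <= V z - V y) ->
  forall n x s t c d, (size s + size t <= n)%N -> a <= x ->
  itv_partition x b s -> itv_partition x b t -> good f e1 x b s c -> good f e2 x b t d ->
  `|gsum g x b s c - gsum g x b t d| <= (e1 + e2) * (V b - V x).
Proof.
move=> e10 e20 HV; elim=> [|n IH] x s t c d.
  case: s => [|p s]; case: t => [|q t] /=; try (move=> h; exfalso; lia).
  move=> _ ax /itv_partition_nil -> _ _ _.
  by rewrite !gsum_nil !subrr normr0 mulr0.
case: s => [|p s] ; first by move=> _ ax /itv_partition_nil xb; subst x;
  move=> /itv_partitionxx -> _ _; rewrite !gsum_nil !subrr normr0 mulr0.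
case: t => [|q t]; first by move=> _ ax Hs /itv_partition_nil xb; subst x;
  move: Hs => /itv_partitionxx.
move=> Hn ax Hs Ht Hgs Hgt.
have xp : x < p by case: Hs => /= /andP[].
have xq : x < q by case: Ht => /= /andP[].
have key : forall m, x < m -> m <= p -> m <= q -> (m = p \/ m = q) ->
    `|gsum g x b (p :: s) c - gsum g x b (q :: t) d| <= (e1 + e2) * (V b - V x).
  move=> m xm mp mq mpq.
  have [[s1 [c1 [Hs1 Hg1 E1 S1 S1']]] Hc0] := @gsum_split R f g e1 x b m p s c xm mp Hs Hgs.
  have [[t1 [d1 [Ht1 Hh1 F1 T1 T1']]] Hd0] := @gsum_split R f g e2 x b m q t d xm mq Ht Hgt.
  have am : a <= m by rewrite (le_trans ax) // ltW.
  have mb : m <= b := itv_partition_le Hs1.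
  have Hsz : (size s1 + size t1 <= n)%N.
    apply: (sz_aux S1 T1 Hn); case: mpq => [/S1' h|/T1' h]; by [left|right].
  have IH1 := IH m s1 t1 c1 d1 Hsz am Hs1 Ht1 Hg1 Hh1.
  rewrite E1 F1.
  have -> : c 0%N * (g m - g x) + gsum g m b s1 c1 - (d 0%N * (g m - g x) + gsum g m b t1 d1)
     = (c 0%N - d 0%N) * (g m - g x) + (gsum g m b s1 c1 - gsum g m b t1 d1) by ring.
  apply: le_trans (ler_normD _ _) _; rewrite normrM.
  have hx : x <= x <= m by rewrite lexx ltW.
  have h1 : `|c 0%N - d 0%N| <= e1 + e2.
    have := Hc0 x hx; have := Hd0 x hx.
    rewrite (distrC (d 0%N)) => h2 h3.
    by apply: le_trans (ler_distD (f x) _ _) _; apply: lerD.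
  have h2 : `|g m - g x| <= V m - V x by apply: HV => //; rewrite ltW.
  have h3 : `|c 0%N - d 0%N| * `|g m - g x| <= (e1 + e2) * (V m - V x).
    by apply: ler_pM.
  have -> : (e1 + e2) * (V b - V x) = (e1 + e2) * (V m - V x) + (e1 + e2) * (V b - V m) by ring.
  exact: lerD.
have [pq|qp] := leP p q.
  by apply: (key p) => //; left.
by apply: (key q) => //; [exact: ltW| right].
Qed.

Lemma path_incr {R : realType} (g : nat -> R) : (forall i, g i < g i.+1) ->
  forall k m, path <%O (g m) [seq g i | i <- iota m.+1 k].
Proof.
move=> gi; elim=> [//|k IH] m /=.
by rewrite gi IH.
Qed.

Lemma nth_lt {R : realType} {a b : R} {s} : itv_partition a b s ->
  forall i, (i < size s)%N -> nth b (a :: s) i < nth b (a :: s) i.+1.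
Proof.
elim: s a => [//|p s IH] a Hp [|i] /=.
  by move=> _; case: Hp => /= /andP[].
by move=> iS; apply: (IH p (itv_partition_cons Hp)).
Qed.

Lemma nth_in {R : realType} {a b : R} {s} : itv_partition a b s ->
  forall i, (i <= size s)%N -> a <= nth b (a :: s) i <= b.
Proof.
move=> Hp i iS.
by rewrite (itv_partition_nth_ge _ Hp) ?(itv_partition_nth_le _ Hp) // ltnS.
Qed.

Lemma unif_part {R : realType} {a b d : R} : a < b -> 0 < d ->
  exists s, itv_partition a b s /\
    forall i, (i < size s)%N -> nth b (a :: s) i.+1 - nth b (a :: s) i < d.
Proof.
move=> ab d0.
have [n hn] : exists n : nat, (b - a) / d < n%:R.
  by eexists; apply: archi_boundP; rewrite divr_ge0 // ?subr_ge0 ltW.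
pose g i := a + (b - a) * (i%:R / (n.+1)%:R).
have n0 : 0 < (n.+1)%:R :> R by rewrite ltr0n.
have gS i : g i.+1 - g i = (b - a) / (n.+1)%:R.
  have e : (i.+1)%:R = i%:R + 1 :> R by rewrite natr1.
  rewrite /g e; ring.
have gi i : g i < g i.+1.
  by rewrite -subr_gt0 gS divr_gt0 // subr_gt0.
have g0 : g 0%N = a by rewrite /g mul0r mulr0 addr0.
have gN : g n.+1 = b by rewrite /g divff ?mulr1 ?subrKC // gt_eqF.
exists [seq g i | i <- iota 1 n.+1].
have Hnth : forall i, (i <= n.+1)%N -> nth b (a :: [seq g i | i <- iota 1 n.+1]) i = g i.
  case=> [|i] hi; first by rewrite /= g0.
  rewrite -[nth b (a :: _) i.+1]/(nth b [seq g i | i <- iota 1 n.+1] i).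
  by rewrite (nth_map 0%N) ?size_iota // nth_iota.
split.
  split; first by rewrite -{1}g0; exact: path_incr.
  by rewrite (last_nth b) size_map size_iota Hnth // gN.
move=> i; rewrite size_map size_iota => hi.
rewrite (Hnth i.+1 hi) (Hnth i (ltnW hi)).
rewrite gS.
rewrite ltr_pdivrMr // -ltr_pdivrMl // mulrC.
apply: (lt_le_trans hn); rewrite ler_nat; exact: leqnSn.
Qed.

Definition ucont {R : realType} (f : R -> R) (a b : R) : Prop :=
  forall eps, 0 < eps -> exists2 del, 0 < del & forall y z, a <= y <= b -> a <= z <= b ->
    `|y - z| < del -> `|f y - f z| < eps.

Lemma good_tags {R : realType} {f : R -> R} {a b eps del : R} {s xi} :
  itv_partition a b s ->
  (forall y z, a <= y <= b -> a <= z <= b -> `|y - z| < del -> `|f y - f z| < eps) ->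
  (forall i, (i < size s)%N ->
         nth b (a :: s) i <= xi i <= nth b (a :: s) i.+1 /\
         nth b (a :: s) i.+1 - nth b (a :: s) i < del) ->
  good f eps a b s (fun i => f (xi i)).
Proof.
move=> Hp Hf Ht i iS y /andP[y1 y2].
have [/andP[x1 x2] hd] := Ht i iS.
have /andP[p1 _] := nth_in Hp i (ltnW iS).
have /andP[_ p2] := nth_in Hp i.+1 iS.
apply: ltW; apply: Hf.
- by rewrite (le_trans p1 x1) (le_trans x2 p2).
- by rewrite (le_trans p1 y1) (le_trans y2 p2).
- rewrite ltr_distlC; apply/andP; split; lra.
Qed.

Lemma RS_sumE {R : realType} (f g : R -> R) a b s xi :
  RS_sum f g a b s xi = gsum g a b s (fun i => f (xi i)).
Proof. by []. Qed.

Lemma RS_exists {R : realType} (f g V : R -> R) (a b : R) : a < b -> ucont f a b ->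
  (forall y z, a <= y -> y <= z -> z <= b -> `|g z - g y| <= V z - V y) ->
  exists I, is_RS_integral f g a b I.
Proof.
move=> ab uf HV.
set W := V b - V a.
have W0 : 0 <= W by apply: le_trans (HV a b _ _ _) => //; rewrite ltW.
pose A := [set x | exists e s c, [/\ 0 < e, itv_partition a b s, good f e a b s c &
   x = gsum g a b s c - e * W]].
have cmp e e' s s' c c' : 0 <= e -> 0 <= e' -> itv_partition a b s -> itv_partition a b s' ->
    good f e a b s c -> good f e' a b s' c' ->
    `|gsum g a b s c - gsum g a b s' c'| <= (e + e') * W.
  move=> e0 e0' Hs Hs' Hc Hc'.
  exact: (@gsum_cmp R f g V a b e e' e0 e0' HV (size s + size s') a s s' c c').
have [del0 del00 Hdel0] := uf 1 ltr01.
have [s0 [Hs0 Hm0]] := unif_part ab del00.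
have Hg0 : good f 1 a b s0 (fun i => f (nth b (a :: s0) i)).
  apply: (good_tags Hs0 Hdel0) => i iS; split; last exact: Hm0.
  by rewrite lexx ltW // (nth_lt Hs0 i iS).
have ubA : forall e' s' c', 0 < e' -> itv_partition a b s' -> good f e' a b s' c' ->
    ubound A (gsum g a b s' c' + e' * W).
  move=> e' s' c' e0' Hs' Hc' x [e [s [c [e0 Hs Hc ->]]]].
  have := cmp _ _ _ _ _ _ (ltW e0) (ltW e0') Hs Hs' Hc Hc'.
  move/ler_distlDr => h.
  have -> : gsum g a b s' c' + e' * W = gsum g a b s' c' + (e + e') * W - e * W by ring.
  by rewrite lerD2r.
have A0 : A !=set0.
  exists (gsum g a b s0 (fun i => f (nth b (a :: s0) i)) - 1 * W).
  rewrite /A /=; exists 1, s0, (fun i => f (nth b (a :: s0) i)); split => //; exact: ltr01.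
have key : forall e' s' c', 0 < e' -> itv_partition a b s' -> good f e' a b s' c' ->
    `|sup A - gsum g a b s' c'| <= e' * W.
  move=> e' s' c' e0' Hs' Hc'.
  have hs : has_sup A by split => //; exists (gsum g a b s' c' + e' * W); exact: ubA.
  have h1 : gsum g a b s' c' - e' * W <= sup A.
    by apply: sup_upper_bound => //; exists e', s', c'.
  have h2 : sup A <= gsum g a b s' c' + e' * W by apply: ge_sup => //; exact: ubA.
  rewrite ler_distlC; apply/andP; split; lra.
exists (sup A) => eps eps0.
set e := eps / (W + 1).
have W1 : 0 < W + 1 by lra.
have e0 : 0 < e by rewrite divr_gt0.
have eW : e * W < eps.
  have h : W / (W + 1) < 1 by rewrite ltr_pdivrMr // mul1r ltrDl ltr01.
  by rewrite /e mulrAC -mulrA -[X in _ < X]mulr1 ltr_pM2l.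
have [del del1 Hdel] := uf e e0.
exists del => // s xi Hs Ht.
rewrite RS_sumE distrC.
apply: le_lt_trans eW.
apply: key => //.
exact: (good_tags Hs Hdel).
Qed.

Lemma ex_min {R : realType} {x y : R} : 0 < x -> 0 < y ->
  exists m : R, [/\ 0 < m, m <= x & m <= y].
Proof.
move=> x0 y0; exists (Num.min x y); split.
- by rewrite lt_min x0 y0.
- by rewrite ge_min lexx.
- by rewrite ge_min lexx orbT.
Qed.

Lemma ex_max {R : realType} {x y z : R} : x < z -> y < z ->
  exists m : R, [/\ x <= m, y <= m & m < z].
Proof.
move=> xz yz; exists (Num.max x y); split.
- by rewrite le_max lexx.
- by rewrite le_max lexx orbT.
- by rewrite gt_max xz yz.
Qed.

Lemma real_ind {R : realType} (a b : R) (P : R -> Prop) : a <= b -> P a ->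
  (forall x, a <= x -> x < b -> P x ->
     exists2 d, 0 < d & forall y, x < y -> y < x + d -> y <= b -> P y) ->
  (forall x, a < x -> x <= b -> (forall y, a <= y -> y < x -> P y) -> P x) -> P b.
Proof.
move=> ab Pa Hf Hl.
pose A := [set x | a <= x <= b /\ forall y, a <= y <= x -> P y].
have Aa : A a.
  split; first by rewrite lexx ab.
  by move=> y /andP[h1 h2]; have -> : y = a by apply/le_anti; rewrite h1 h2.
have ubA : ubound A b by move=> x [/andP[_ ->]].
have hs : has_sup A by split; [exists a | exists b].
set s := sup A.
have as_ : a <= s by apply: sup_upper_bound.
have sb : s <= b by apply: ge_sup => //; exists a.
have H1 : forall y, a <= y -> y < s -> P y.
  move=> y ay ys.
  have ys0 : 0 < s - y by rewrite subr_gt0.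
  have [x [_ Hx] yx] := sup_adherent ys0 hs.
  apply: Hx; rewrite ay /=.
  by move: yx; rewrite /s opprB addrCA subrr addr0 => /ltW.
have Ps : P s.
  have [<-|ass] := eqVneq a s; first by [].
  apply: Hl => //; by rewrite lt_neqAle ass.
have As : A s.
  split; first by rewrite as_ sb.
  move=> y /andP[ay ys]; have [<-|nys] := eqVneq s y; first by [].
  by apply: H1 => //; rewrite lt_neqAle ys eq_sym nys.
have [sb'|] := ltP s b; last first.
  by move=> bs; have -> : b = s by apply/le_anti; rewrite bs sb.
have [d d0 Hd] := Hf s as_ sb' Ps.
have bs0 : 0 < b - s by rewrite subr_gt0.
have [m [m0 md mb]] := ex_min d0 bs0.
have Az : A (s + m / 2).
  split; first by apply/andP; split; lra.
  move=> y /andP[ay yz].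
  have [ys|sy] := leP y s; first by case: As => _; apply; rewrite ay ys.
  by apply: Hd => //; lra.
have := sup_upper_bound hs Az; rewrite -/s => h.
exfalso; lra.
Qed.

Definition pcont {R : realType} (f : R -> R) (a b : R) : Prop :=
  forall x, a <= x <= b -> forall eps, 0 < eps ->
    exists2 del, 0 < del & forall y, a <= y <= b -> `|x - y| < del -> `|f x - f y| < eps.

Lemma tri2 {R : realType} (u v w eps : R) : `|u - v| < eps / 2 -> `|u - w| < eps / 2 ->
  `|v - w| < eps.
Proof.
move=> h1 h2; rewrite (distrC u) in h1.
by apply: le_lt_trans (ler_distD u _ _) _; rewrite (splitr eps) ltrD.
Qed.

Lemma dist_lt {R : realType} (x y e : R) : x - e < y -> y < x + e -> `|x - y| < e.
Proof. by move=> h1 h2; rewrite ltr_distlC h1 h2. Qed.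

Lemma arF {R : realType} {x y z y' d m : R} : 0 < d -> y' < x + d / 2 -> m <= d / 2 ->
  y <= y' -> z <= y' -> y - m < z -> z < y + m -> x < y \/ x < z ->
  [/\ x - d < y, y < x + d, x - d < z & z < x + d].
Proof. move=> d0 h1 h2 h3 h4 h5 h6 [h|h]; split; lra. Qed.

Lemma arL {R : realType} {x y z y0 d m : R} : 0 < d -> x - d / 2 <= y0 -> m <= d / 2 ->
  y <= x -> z <= x -> y - m < z -> z < y + m -> y0 < y \/ y0 < z ->
  [/\ x - d < y, y < x + d, x - d < z & z < x + d].
Proof. move=> d0 h1 h2 h3 h4 h5 h6 [h|h]; split; lra. Qed.

Lemma heine {R : realType} {f : R -> R} {a b : R} : a <= b -> pcont f a b -> ucont f a b.
Proof.
move=> ab pc eps eps0.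
pose P x := exists2 del, 0 < del & forall y z, a <= y <= x -> a <= z <= x ->
    `|y - z| < del -> `|f y - f z| < eps.
suff [del del0 Hd] : P b by exists del.
have e2 : 0 < eps / 2 by rewrite divr_gt0.
apply: (@real_ind R a b P ab).
- exists 1 => // y z /andP[ay ya] /andP[az za] _.
  have -> : y = a by apply/le_anti; rewrite ay ya.
  have -> : z = a by apply/le_anti; rewrite az za.
  by rewrite subrr normr0.
- move=> x ax xb [d1 d10 Hd1].
  have xin : a <= x <= b by rewrite ax ltW.
  have [dx dx0 Hdx] := pc x xin _ e2.
  have dx2 : 0 < dx / 2 by rewrite divr_gt0.
  exists (dx / 2) => // y' xy y'd y'b.
  have [m [m0 m1 m2]] := ex_min d10 dx2.
  have hb : forall w, a <= w -> w <= y' -> `|x - w| < dx -> `|f x - f w| < eps / 2.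
    by move=> w aw wy h; apply: Hdx => //; rewrite aw (le_trans wy y'b).
  exists m => // y z /andP[ay yy'] /andP[az zy'] hyz.
  case: (boolP ((y <= x) && (z <= x))) => [/andP[yx zx]|nyz].
    by apply: Hd1; rewrite ?ay ?az // (lt_le_trans hyz m1).
  move: hyz; rewrite ltr_distlC => /andP[h1 h2].
  have hor : x < y \/ x < z.
    by move: nyz; rewrite negb_and -!ltNge => /orP.
  have [k1 k2 k3 k4] := arF dx0 y'd m2 yy' zy' h1 h2 hor.
  by apply: (@tri2 _ (f x)); apply: hb => //; apply: dist_lt.
- move=> x ax xb H.
  have xin : a <= x <= b by rewrite xb ltW.
  have [dx dx0 Hdx] := pc x xin _ e2.
  have dx2 : 0 < dx / 2 by rewrite divr_gt0.
  have xdx : x - dx / 2 < x by rewrite ltrBlDr ltrDl.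
  have [y0 [ay0 y01 y0x]] := ex_max ax xdx.
  have [d1 d10 Hd1] := H y0 ay0 y0x.
  have [m [m0 m1 m2]] := ex_min d10 dx2.
  have hb : forall w, a <= w -> w <= x -> `|x - w| < dx -> `|f x - f w| < eps / 2.
    by move=> w aw wy h; apply: Hdx => //; rewrite aw (le_trans wy xb).
  exists m => // y z /andP[ay yx] /andP[az zx] hyz.
  case: (boolP ((y <= y0) && (z <= y0))) => [/andP[yy0 zy0]|nyz].
    by apply: Hd1; rewrite ?ay ?az // (lt_le_trans hyz m1).
  move: hyz; rewrite ltr_distlC => /andP[h1 h2].
  have hor : y0 < y \/ y0 < z.
    by move: nyz; rewrite negb_and -!ltNge => /orP.
  have [k1 k2 k3 k4] := arL dx0 y01 m2 yx zx h1 h2 hor.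
  by apply: (@tri2 _ (f x)); apply: hb => //; apply: dist_lt.
Qed.

Lemma neg_away {R : realType} {f : R -> R} {a b : R} : a <= b -> pcont f a b ->
  (forall y, a <= y <= b -> f y < 0) ->
  exists2 c, 0 < c & forall y, a <= y <= b -> f y <= - c.
Proof.
move=> ab pc fn.
pose P x := exists2 c, 0 < c & forall y, a <= y <= x -> f y <= - c.
suff [c c0 Hc] : P b by exists c.
apply: (@real_ind R a b P ab).
- have fa : f a < 0 by apply: fn; rewrite lexx ab.
  exists (- f a); first by rewrite oppr_gt0.
  move=> y /andP[ay ya]; have -> : y = a by apply/le_anti; rewrite ay ya.
  by rewrite opprK.
- move=> x ax xb [c c0 Hc].
  have xin : a <= x <= b by rewrite ax ltW.
  have fx : f x < 0 := fn x xin.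
  have e2 : 0 < - f x / 2 by rewrite divr_gt0 // oppr_gt0.
  have [dx dx0 Hdx] := pc x xin _ e2.
  exists dx => // y' xy y'd y'b.
  have [m [m0 m1 m2]] := ex_min c0 e2.
  exists m => // y /andP[ay yy'].
  have [yx|xy2] := leP y x.
    by apply: le_trans (Hc y _) _; rewrite ?ay ?yx // lerN2.
  have : `|f x - f y| < - f x / 2.
    by apply: Hdx; [rewrite ay (le_trans yy' y'b)| apply: dist_lt; lra].
  rewrite ltr_distlC => /andP[h1 h2]; lra.
- move=> x ax xb H.
  have xin : a <= x <= b by rewrite xb ltW.
  have fx : f x < 0 := fn x xin.
  have e2 : 0 < - f x / 2 by rewrite divr_gt0 // oppr_gt0.
  have [dx dx0 Hdx] := pc x xin _ e2.
  have dx2 : 0 < dx / 2 by rewrite divr_gt0.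
  have xdx : x - dx / 2 < x by rewrite ltrBlDr ltrDl.
  have [y0 [ay0 y01 y0x]] := ex_max ax xdx.
  have [c c0 Hc] := H y0 ay0 y0x.
  have [m [m0 m1 m2]] := ex_min c0 e2.
  exists m => // y /andP[ay yx].
  have [yy0|y0y] := leP y y0.
    by apply: le_trans (Hc y _) _; rewrite ?ay ?yy0 // lerN2.
  have : `|f x - f y| < - f x / 2.
    by apply: Hdx; [rewrite ay (le_trans yx xb)| apply: dist_lt; lra].
  rewrite ltr_distlC => /andP[h1 h2]; lra.
Qed.

Lemma piece {R : realType} (f g V : R -> R) (al be eps : R) : al < be -> 0 <= eps ->
  (forall y z, al <= y -> y <= z -> z <= be -> `|g z - g y| <= V z - V y) ->
  (forall y, al <= y <= be -> `|f al - f y| < eps) ->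
  (exists I, is_RS_integral f g al be I /\ I <= 0) ->
  f al * (g be - g al) <= 3 * eps * (V be - V al).
Proof.
move=> ab e0 HV Hf [I [HI I0]].
apply/ler_addgt0Pr => e' e'0.
have [del' del'0 Hd'] := HI e' e'0.
have [s [Hs Hm]] := unif_part ab del'0.
have h1 := Hd' s (fun i => nth be (al :: s) i) Hs
  (fun i iS => conj (introT andP (conj (lexx _) (ltW (nth_lt Hs i iS)))) (Hm i iS)).
rewrite RS_sumE in h1.
have g1 : good f (eps + eps) al be s (fun i => f (nth be (al :: s) i)).
  move=> i iS y /andP[y1 y2].
  have /andP[p1 _] := nth_in Hs i (ltnW iS).
  have /andP[_ p2] := nth_in Hs i.+1 iS.
  have E : (eps + eps) / 2 = eps by field.
  apply: ltW; apply: (@tri2 _ (f al)); rewrite E.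
  - by apply: Hf; rewrite p1 (le_trans (ltW (nth_lt Hs i iS)) p2).
  - by apply: Hf; rewrite (le_trans p1 y1) (le_trans y2 p2).
have g2 : good f eps al be [:: be] (fun _ => f al).
  move=> [|//] _ y /= /andP[y1 y2]; apply: ltW; apply: Hf; by rewrite y1 y2.
have e20 : 0 <= eps + eps by rewrite addr_ge0.
have := @gsum_cmp R f g V al be (eps + eps) eps e20 e0 HV (size s + 1) al s [:: be] _ _
   (leqnn _) (lexx _) Hs (itv_partition1 ab) g1 g2.
rewrite gsum_cons gsum_nil addr0.
rewrite ler_distlC => /andP[h2 h3].
move: h1; rewrite ltr_distlC => /andP[h4 h5].
lra.
Qed.

Lemma MON {R : realType} (f g V : R -> R) (a b : R) : a < b -> pcont f a b ->
  (forall y, a <= y <= b -> f y < 0) ->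
  (forall y z, a <= y -> y <= z -> z <= b -> `|g z - g y| <= V z - V y) ->
  (forall al be, a <= al -> al < be -> be <= b ->
     exists I, is_RS_integral f g al be I /\ I <= 0) ->
  g a <= g b.
Proof.
move=> ab pc fn HV HI.
have [c c0 Hc] := neg_away (ltW ab) pc fn.
have uf := heine (ltW ab) pc.
set W := V b - V a.
have W0 : 0 <= W by apply: le_trans (HV a b _ _ _) => //; rewrite ltW.
rewrite leNgt; apply/negP => gba.
set D := g a - g b.
have D0 : 0 < D by rewrite subr_gt0.
set eps := c * D / (3 * W + 1).
have W1 : 0 < 3 * W + 1 by lra.
have eps0 : 0 < eps by rewrite divr_gt0 // mulr_gt0.
have epsW : 3 * eps * W < c * D.
  have h : 3 * W / (3 * W + 1) < 1 by rewrite ltr_pdivrMr // mul1r ltrDl ltr01.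
  have -> : 3 * eps * W = c * D * (3 * W / (3 * W + 1)) by rewrite /eps; field; lra.
  by rewrite -[X in _ < X]mulr1 ltr_pM2l // mulr_gt0.
have [del del0 Hdel] := uf eps eps0.
have [s [Hs Hm]] := unif_part ab del0.
set p := nth b (a :: s) in Hm *.
have key : forall i, (i < size s)%N ->
    - (3 * eps) * (V (p i.+1) - V (p i)) <= c * (g (p i.+1) - g (p i)).
  move=> i iS.
  have /andP[p1 _] := nth_in Hs i (ltnW iS).
  have /andP[_ p2] := nth_in Hs i.+1 iS.
  have lt := nth_lt Hs i iS.
  have mi := Hm i iS.
  have hp := @piece R f g V (p i) (p i.+1) eps lt (ltW eps0).
  have := hp (fun y z h1 h2 h3 => HV y z (le_trans p1 h1) h2 (le_trans h3 p2)).
  move=> /(_ _ (HI _ _ p1 lt p2)).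
  have Hf : forall y, p i <= y <= p i.+1 -> `|f (p i) - f y| < eps.
    move=> y /andP[y1 y2]; apply: Hdel.
    - by rewrite p1 (le_trans (ltW lt) p2).
    - by rewrite (le_trans p1 y1) (le_trans y2 p2).
    - by apply: dist_lt; lra.
  move=> /(_ Hf) h.
  have fp : f (p i) <= - c by apply: Hc; rewrite p1 (le_trans (ltW lt) p2).
  have dV : 0 <= V (p i.+1) - V (p i).
    by apply: le_trans (HV _ _ p1 (ltW lt) p2).
  have [dg|dg] := leP 0 (g (p i.+1) - g (p i)).
    have : 0 <= c * (g (p i.+1) - g (p i)) by rewrite mulr_ge0 // ltW.
    have : 0 <= 3 * eps * (V (p i.+1) - V (p i)) by rewrite mulr_ge0 // mulr_ge0 // ltW.
    lra.
  have : 0 <= (f (p i) + c) * (g (p i.+1) - g (p i)).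
    have fc : f (p i) + c <= 0 by lra.
    by rewrite mulr_le0 // ltW.
  lra.
have key' : forall i, (0 <= i < size s)%N ->
    - (3 * eps) * (V (p i.+1) - V (p i)) <= c * (g (p i.+1) - g (p i)).
  by move=> i /andP[_]; exact: key.
have := ler_sum_nat key'.
rewrite -mulr_sumr -mulr_sumr !telescope_sumr // /p /= !(itv_partition_nth_size _ Hs) -/W.
move: epsW; rewrite /D.
lra.
Qed.

Lemma smart {R : realType} (f g : R -> R) (a b I : R) : a < b -> is_RS_integral f g a b I ->
  (forall x y, a <= x -> x < y -> y <= b ->
     exists w, x <= w <= y /\ f w * (g y - g x) <= 0) -> I <= 0.
Proof.
move=> ab HI Hw.
apply/ler_addgt0Pr => e e0; rewrite add0r.
have [del del0 Hd] := HI e e0.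
have [s [Hs Hm]] := unif_part ab del0.
have : forall i, exists w, (i < size s)%N ->
    nth b (a :: s) i <= w <= nth b (a :: s) i.+1 /\
    f w * (g (nth b (a :: s) i.+1) - g (nth b (a :: s) i)) <= 0.
  move=> i; case: (ltnP i (size s)) => iS; last by exists 0.
  have /andP[p1 _] := nth_in Hs i (ltnW iS).
  have /andP[_ p2] := nth_in Hs i.+1 iS.
  have [w Hw'] := Hw _ _ p1 (nth_lt Hs i iS) p2.
  by exists w.
move=> /choice [xi Hxi].
have := Hd s xi Hs (fun i iS => conj (proj1 (Hxi i iS)) (Hm i iS)).
rewrite RS_sumE.
have S0 : gsum g a b s (fun i => f (xi i)) <= 0.
  rewrite /gsum big_nat_cond; apply: sumr_le0 => i /andP[/andP[_ iS] _].
  exact: (proj2 (Hxi i iS)).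
rewrite ltr_distlC => /andP[h1 h2].
lra.
Qed.

Lemma BV_V {R : realType} {g : R -> R} {T : R} : bounded_variation 0 T g ->
  forall y z, 0 <= y -> y <= z -> z <= T ->
  `|g z - g y| <= fine (total_variation 0 z g) - fine (total_variation 0 y g).
Proof.
move=> bv y z y0 yz zT.
have z0 : 0 <= z := le_trans y0 yz.
have bz : bounded_variation 0 z g := bounded_variationl z0 zT bv.
have by_ : bounded_variation 0 y g := bounded_variationl y0 yz bz.
have byz : bounded_variation y z g := bounded_variationr y0 yz bz.
have fy : total_variation 0 y g \is a fin_num := (bounded_variationP g y0).1 by_.
have fyz : total_variation y z g \is a fin_num := (bounded_variationP g yz).1 byz.
rewrite (total_variationD g y0 yz) fineD //.
have -> : fine (total_variation 0 y g) + fine (total_variation y z g) -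
  fine (total_variation 0 y g) = fine (total_variation y z g) by ring.
have := total_variation_ge g yz.
by rewrite -(fineK fyz) lee_fin.
Qed.

Lemma within_pcont {R : realType} {f : R -> R} {a b : R} :
  {within `[a, b], continuous f} -> pcont f a b.
Proof.
move=> cf x xin eps eps0.
have := (subspace_continuousP _ _).1 cf x.
have xA : [set` `[a, b]] x by rewrite /= in_itv /= xin.
move=> /(_ xA) /cvgrPdist_lt /(_ eps eps0).
rewrite near_withinE => /nbhs_ballP [d /= d0 Hd].
exists d => // y yin xy.
apply: Hd; first by rewrite -ball_normE /=.
by rewrite /= in_itv /= yin.
Qed.

Lemma L1_sub {R : realType} {T : R} {S : sublinear_space T} {t} {X Z : Omega S -> R} :
  L1 S t X -> L1 S t Z -> L1 S t (fun w => X w - Z w).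
Proof.
move=> hX hZ.
have -> : (fun w => X w - Z w) = (fun w => X w + (-1) * Z w).
  by apply/funext => w; rewrite mulN1r.
exact: L1_add hX (L1_scale _ hZ).
Qed.

Lemma Ehat_diff {R : realType} {T : R} {S : sublinear_space T} {X Z : Omega S -> R} :
  L1 S T X -> L1 S T Z -> Ehat S X - Ehat S Z <= Ehat S (fun w => `|X w - Z w|).
Proof.
move=> hX hZ.
have E : X = (fun w => Z w + (X w - Z w)) by apply/funext => w; ring.
have h := Ehat_subadd hZ (L1_sub hX hZ).
rewrite -E in h.
have h2 : Ehat S (fun w => X w - Z w) <= Ehat S (fun w => `|X w - Z w|).
  by apply: Ehat_mono; [exact: L1_sub|exact/L1_abs/L1_sub|move=> w; exact: ler_norm].
lra.
Qed.

Lemma Ehat_dist {R : realType} {T : R} {S : sublinear_space T} {X Z : Omega S -> R} :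
  L1 S T X -> L1 S T Z -> `|Ehat S X - Ehat S Z| <= Ehat S (fun w => `|X w - Z w|).
Proof.
move=> hX hZ; rewrite ler_norml; apply/andP; split; last exact: Ehat_diff.
have := Ehat_diff hZ hX.
have -> : (fun w => `|Z w - X w|) = (fun w => `|X w - Z w|).
  by apply/funext => w; rewrite distrC.
lra.
Qed.

Lemma e_pcont {R : realType} {T : R} {S : sublinear_space T}
  {hbar : R -> Omega S -> R -> R} {Y : R -> Omega S -> R} :
  hbar_ok hbar -> C1G Y ->
  (forall t, 0 <= t <= T -> L1 S T (fun om => hbar t om (Y t om))) ->
  pcont (fun v => Ehat S (fun om => hbar v om (Y v om))) 0 T.
Proof.
move=> [hu [_ [_ [_ [cl [cu [cl0 [clcu hlip]]]]]]]] [YL1 Ycont] HL x xin eps eps0.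
have cu0 : 0 <= cu by lra.
have e2 : 0 < eps / 2 by rewrite divr_gt0.
have [d1 d10 Hd1] := hu (eps / 2) e2.
have cu1 : 0 < 2 * (cu + 1) by lra.
set eta := eps / (2 * (cu + 1)).
have eta0 : 0 < eta by rewrite divr_gt0.
have [d2 d20 Hd2] := Ycont x xin eta eta0.
have [m [m0 m1 m2]] := ex_min d10 d20.
exists m => // y yin xy.
have /andP[x0 xT] := xin.
have /andP[y0 yT] := yin.
have L1Yx : L1 S T (Y x) := L1_incr x0 xT (lexx T) (YL1 x xin).
have L1Yy : L1 S T (Y y) := L1_incr y0 yT (lexx T) (YL1 y yin).
have L1dY : L1 S T (fun om => `|Y x om - Y y om|) := L1_abs (L1_sub L1Yx L1Yy).
apply: le_lt_trans (Ehat_dist (HL x xin) (HL y yin)) _.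
have pw : forall om, `|hbar x om (Y x om) - hbar y om (Y y om)| <=
    (fun w => (fun _ => eps / 2) w + (fun w => cu * `|Y x w - Y y w|) w) om.
  move=> om /=.
  have h1 : `|hbar x om (Y x om) - hbar y om (Y x om)| < eps / 2.
    by apply: Hd1 => //; [exact: lt_le_trans xy m1| rewrite subrr normr0].
  have h2 := (hlip y om (Y x om) (Y y om) yin).2.
  apply: le_trans (ler_distD (hbar y om (Y x om)) _ _) _.
  by apply: lerD => //; exact: ltW.
have L1s := L1_add (L1_cst S T (eps / 2)) (L1_scale cu L1dY).
apply: le_lt_trans (Ehat_mono (L1_abs (L1_sub (HL x xin) (HL y yin))) L1s pw) _.
apply: le_lt_trans (Ehat_subadd (L1_cst S T (eps / 2)) (L1_scale cu L1dY)) _.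
rewrite Ehat_cst Ehat_poshom //.
have hE := Hd2 y yin (lt_le_trans xy m2).
have h3 : cu * Ehat S (fun om => `|Y x om - Y y om|) <= cu * eta.
  by apply: ler_wpM2l => //; exact: ltW.
have h4 : cu * eta < eps / 2.
  have -> : cu * eta = eps / 2 * (cu / (cu + 1)) by rewrite /eta; field; lra.
  have h5 : cu / (cu + 1) < 1 by rewrite ltr_pdivrMr ?mul1r ?ltrDl //; lra.
  by rewrite -[X in _ < X]mulr1 ltr_pM2l.
lra.
Qed.

Lemma pcont_sub {R : realType} {f g : R -> R} {a b : R} : pcont f a b -> pcont g a b ->
  pcont (fun v => f v - g v) a b.
Proof.
move=> pf pg x xin eps eps0.
have e2 : 0 < eps / 2 by rewrite divr_gt0.
have [d1 d10 H1] := pf x xin _ e2.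
have [d2 d20 H2] := pg x xin _ e2.
have [m [m0 m1 m2]] := ex_min d10 d20.
exists m => // y yin xy.
have h1 := H1 y yin (lt_le_trans xy m1).
have h2 := H2 y yin (lt_le_trans xy m2).
move: h1 h2; rewrite !ltr_distlC => /andP[h1 h1'] /andP[h2 h2'].
apply/andP; split; lra.
Qed.

Lemma pcont_opp {R : realType} {f : R -> R} {a b : R} : pcont f a b ->
  pcont (fun v => - f v) a b.
Proof.
move=> pf x xin eps eps0.
have [d d0 H] := pf x xin _ eps0.
exists d => // y yin xy.
by rewrite -opprD normrN; exact: H.
Qed.

Lemma pcont_itv {R : realType} {f : R -> R} {a b : R} {a' b' : R} : pcont f a b ->
  a <= a' -> b' <= b -> pcont f a' b'.
Proof.
move=> pf aa bb x /andP[x1 x2] eps eps0.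
have xin : a <= x <= b by rewrite (le_trans aa x1) (le_trans x2 bb).
have [d d0 H] := pf x xin _ eps0.
exists d => // y /andP[y1 y2] xy.
by apply: H => //; rewrite (le_trans aa y1) (le_trans y2 bb).
Qed.

Lemma RS_neg {R : realType} {f g : R -> R} {a b I : R} : is_RS_integral f g a b I ->
  is_RS_integral (fun v => - f v) (fun v => - g v) a b I.
Proof.
move=> HI eps e0; have [del d0 H] := HI eps e0.
exists del => // s xi Hs Ht.
have -> : RS_sum (fun v => - f v) (fun v => - g v) a b s xi = RS_sum f g a b s xi.
  by apply: eq_bigr => i _; ring.
exact: H.
Qed.

Lemma RS_zero {R : realType} (f g : R -> R) (a : R) : is_RS_integral f g a a 0.
Proof.
move=> eps e0; exists 1 => // s xi /itv_partitionxx -> _.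
by rewrite RS_sumE gsum_nil subrr normr0.
Qed.

Lemma lim_left {R : realType} {g : R -> R} {T s t : R} : pcont g 0 T ->
  0 <= s -> s < t -> t <= T -> (forall a, s < a -> a <= t -> g a <= g t) -> g s <= g t.
Proof.
move=> pg s0 st tT H.
rewrite leNgt; apply/negP => gts.
have e0 : 0 < g s - g t by rewrite subr_gt0.
have sin : 0 <= s <= T by rewrite s0 (le_trans (ltW st) tT).
have [d d0 Hd] := pg s sin _ e0.
have d2 : 0 < d / 2 by rewrite divr_gt0.
have ts0 : 0 < t - s by rewrite subr_gt0.
have [m [m0 m1 m2]] := ex_min d2 ts0.
have ain : 0 <= s + m <= T by apply/andP; split; lra.
have := Hd (s + m) ain.
have -> : s - (s + m) = - m by ring.
rewrite normrN gtr0_norm // => /(_ ltac:(lra)).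
have := H (s + m) ltac:(lra) ltac:(lra).
rewrite ltr_distlC => h /andP[h1 h2]; lra.
Qed.

Theorem lemma3p5 (R : realType) (T : R) (hT : 0 < T)
  (S : sublinear_space T) (l u : R -> R) (hbar : R -> Omega S -> R -> R)
  (Y : R -> Omega S -> R) (Rf : R -> R) :
  barriers_ok T l u -> hbar_ok hbar ->
  C1G Y -> CTB T Rf ->
  (forall t, 0 <= t <= T -> L1 S T (fun om => hbar t om (Y t om))) ->
  (forall t, 0 <= t <= T ->
     l t <= Ehat S (fun om => hbar t om (Y t om)) <= u t) ->
  let e := fun v => Ehat S (fun om => hbar v om (Y v om)) in
  (forall s t, 0 <= s -> s <= t -> t <= T ->
     RS_int_le0 (fun v => e v - l v) Rf s t /\
     RS_int_le0 (fun v => e v - u v) Rf s t)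
  <->
  ((forall s t, 0 <= s -> s < t -> t <= T ->
      ((forall v, s < v <= t -> e v < u v) -> Rf s <= Rf t) /\
      ((forall v, s < v <= t -> l v < e v) -> Rf t <= Rf s)) /\
   (forall v, 0 <= v <= T ->
      (e v < u v -> dR_nonneg_at T Rf v) /\
      (l v < e v -> dR_nonpos_at T Rf v))).
Proof.
move=> [lc [uc _]] hok hY [Rc [Rbv R0]] HL Hbnd e.
have pe : pcont e 0 T := e_pcont hok hY HL.
have pl := within_pcont lc.
have pu := within_pcont uc.
have pR := within_pcont Rc.
pose V x := fine (total_variation 0 x Rf).
have HV0 : forall y z, 0 <= y -> y <= z -> z <= T -> `|Rf z - Rf y| <= V z - V y.
  exact: BV_V Rbv.
have HVN : forall y z, 0 <= y -> y <= z -> z <= T ->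
    `|(fun v => - Rf v) z - (fun v => - Rf v) y| <= V z - V y.
  move=> y z y0 yz zT /=.
  have -> : - Rf z - - Rf y = - (Rf z - Rf y) by ring.
  by rewrite normrN; exact: HV0.
have peu := pcont_sub pe pu.
have pel := pcont_sub pe pl.
split.
- move=> Hint.
  have P1 : forall s t, 0 <= s -> s < t -> t <= T ->
      ((forall v, s < v <= t -> e v < u v) -> Rf s <= Rf t) /\
      ((forall v, s < v <= t -> l v < e v) -> Rf t <= Rf s).
    move=> s t s0 st tT; split => Hv.
    + apply: (lim_left pR s0 st tT) => a sa at_.
      have [->|nat] := eqVneq a t; first exact: lexx.
      have a_t : a < t by rewrite lt_neqAle nat at_.
      have a0 : 0 <= a by rewrite (le_trans s0) // ltW.
      apply: (@MON R (fun v => e v - u v) Rf V a t a_t).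
      * exact: pcont_itv peu a0 tT.
      * move=> y /andP[ay yt]; rewrite subr_lt0; apply: Hv.
        by rewrite yt (lt_le_trans sa ay).
      * by move=> y z ay yz zt; apply: HV0 => //; [exact: le_trans ay|exact: le_trans tT].
      * move=> al be aal albe bet.
        have al0 : 0 <= al := le_trans a0 aal.
        exact: (Hint al be al0 (ltW albe) (le_trans bet tT)).2.
    + have pRN := pcont_opp pR.
      suff : - Rf s <= - Rf t by rewrite lerN2.
      apply: (lim_left pRN s0 st tT) => a sa at_.
      have [->|nat] := eqVneq a t; first exact: lexx.
      have a_t : a < t by rewrite lt_neqAle nat at_.
      have a0 : 0 <= a by rewrite (le_trans s0) // ltW.
      apply: (@MON R (fun v => - (e v - l v)) (fun v => - Rf v) V a t a_t).
      * exact: pcont_itv (pcont_opp pel) a0 tT.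
      * move=> y /andP[ay yt]; rewrite oppr_lt0 subr_gt0; apply: Hv.
        by rewrite yt (lt_le_trans sa ay).
      * by move=> y z ay yz zt; apply: HVN => //; [exact: le_trans ay|exact: le_trans tT].
      * move=> al be aal albe bet.
        have al0 : 0 <= al := le_trans a0 aal.
        have [I [HI I0]] := (Hint al be al0 (ltW albe) (le_trans bet tT)).1.
        by exists I; split => //; exact: RS_neg.
  split => // v vin; split => Hv.
  + have e0 : 0 < u v - e v by rewrite subr_gt0.
    have [d d0 Hd] := peu v vin _ e0.
    exists d => // a b a0 bT va ab bv.
    have [<-|nab] := eqVneq a b; first by [].
    have a_b : a < b by rewrite lt_neqAle nab ab.
    apply: (P1 a b a0 a_b bT).1 => w /andP[aw wb].
    have win : 0 <= w <= T by apply/andP; split; lra.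
    have := Hd w win (@dist_lt _ v w d ltac:(lra) ltac:(lra)).
    rewrite ltr_distlC => /andP[h1 h2]; lra.
  + have e0 : 0 < e v - l v by rewrite subr_gt0.
    have [d d0 Hd] := pel v vin _ e0.
    exists d => // a b a0 bT va ab bv.
    have [<-|nab] := eqVneq a b; first by [].
    have a_b : a < b by rewrite lt_neqAle nab ab.
    apply: (P1 a b a0 a_b bT).2 => w /andP[aw wb].
    have win : 0 <= w <= T by apply/andP; split; lra.
    have := Hd w win (@dist_lt _ v w d ltac:(lra) ltac:(lra)).
    rewrite ltr_distlC => /andP[h1 h2]; lra.
- move=> [P1 _] s t s0 st tT.
  have [<-|nst] := eqVneq s t.
    by split; exists 0; split => //; exact: RS_zero.
  have s_t : s < t by rewrite lt_neqAle nst st.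
  have HVst : forall y z, s <= y -> y <= z -> z <= t -> `|Rf z - Rf y| <= V z - V y.
    by move=> y z sy yz zt; apply: HV0 => //; [exact: le_trans sy|exact: le_trans tT].
  split.
  + have uf := heine st (pcont_itv pel s0 tT).
    have [I HI] := @RS_exists R _ Rf V s t s_t uf HVst.
    exists I; split => //.
    apply: (@smart R _ _ s t I s_t HI) => x y sx xy yt.
    have x0 : 0 <= x := le_trans s0 sx.
    have yT : y <= T := le_trans yt tT.
    case: (pselect (forall v, x < v <= y -> l v < e v)) => Hv.
      exists x; split; first by rewrite lexx ltW.
      have := (P1 x y x0 xy yT).2 Hv.
      have := Hbnd x ltac:(apply/andP; split; lra).
      move=> /andP[h1 _] h2.
      by rewrite mulr_ge0_le0 // ?subr_ge0 // subr_le0.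
    move/existsNP: Hv => [v /not_implyP [/andP[xv vy] nlv]].
    exists v; split; first by rewrite ltW.
    have := Hbnd v ltac:(apply/andP; split; lra).
    move=> /andP[h1 _].
    have -> : e v - l v = 0.
      by apply/eqP; rewrite subr_eq0 eq_le; apply/andP; split => //; rewrite leNgt; apply/negP.
    by rewrite mul0r.
  + have uf := heine st (pcont_itv peu s0 tT).
    have [I HI] := @RS_exists R _ Rf V s t s_t uf HVst.
    exists I; split => //.
    apply: (@smart R _ _ s t I s_t HI) => x y sx xy yt.
    have x0 : 0 <= x := le_trans s0 sx.
    have yT : y <= T := le_trans yt tT.
    case: (pselect (forall v, x < v <= y -> e v < u v)) => Hv.
      exists x; split; first by rewrite lexx ltW.
      have := (P1 x y x0 xy yT).1 Hv.
      have := Hbnd x ltac:(apply/andP; split; lra).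
      move=> /andP[_ h1] h2.
      by rewrite mulr_le0_ge0 // ?subr_le0 // subr_ge0.
    move/existsNP: Hv => [v /not_implyP [/andP[xv vy] nlv]].
    exists v; split; first by rewrite ltW.
    have := Hbnd v ltac:(apply/andP; split; lra).
    move=> /andP[_ h1].
    have -> : e v - u v = 0.
      by apply/eqP; rewrite subr_eq0 eq_le; apply/andP; split => //; rewrite leNgt; apply/negP.
    by rewrite mul0r.
Qed.
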